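(* Let \(\mathcal{H}=(A,(H_i)_{i=1}^k)\) and \(\mathcal{K}=(B,(K_i)_{i=1}^k)\) be \(k\)-relational F-hypergraphs and \(f\colon\mathcal{H}\to\mathcal{K}\) a map of \(k\)-relational F-hypergraphs. The following are equivalent: (i) \(f\) is a positional reduction; (ii) the equivalence relation \(E=\{(a,a')\in A\times A\mid f(a)=f(a')\}\) is a regular equivalence on \((A,H_i)\) for each \(i\in\{1,\dots,k\}\), and \((B,K_i)=(A/E,H_i/E)\) for each \(i\) (with \(f\) the quotient map).
   Context: An F-hypergraph is \((A,H)\) with \(H\subseteq A\times\mathcal{P}(A)\) (hyperedges \((a,U)\)). A \(k\)-relational F-hypergraph is \((A,(H_i)_{i=1}^k)\) with each \((A,H_i)\) an F-hypergraph. A map \((A,(H_i))\to(B,(K_i))\) is a function \(f\colon A\to B\) with \((f(a),f(V))\in K_i\) whenever \((a,V)\in H_i\). It reflects hyperedges if for all \(a\in A\), all \(i\) and all \((f(a),U)\in K_i\) there is \(V\subseteq A\) with \((a,V)\in H_i\) and \(f(V)=U\). A positional reduction is a map that is surjective on vertices and reflects hyperedges. A regular equivalence on an F-hypergraph \((A,H)\) is an equivalence relation \(E\) on \(A\) such that for every \((a,a')\in E\) and every \((a,U)\in H\) there is \((a',U')\in H\) with: for each \(u\in U\) some \(u'\in U'\) has \((u,u')\in E\), and for each \(u'\in U'\) some \(u\in U\) has \((u,u')\in E\). For an equivalence relation \(E\) on \(A\), the blockmodel \(H/E\) is the F-hypergraph structure on the set of classes \(A/E\) in which \(([a],X)\)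 is a hyperedge iff there exists \((a,U)\in H\) with \(X=\{[u]\mid u\in U\}\). *)

(* Defs.v *)
From mathcomp Require Import all_boot.
From mathcomp Require Export classical_sets.
Set Implicit Arguments. Unset Strict Implicit. Unset Printing Implicit Defensive.
Local Open Scope classical_set_scope.

(* An F-hypergraph structure on A: H a U means (a,U) is a hyperedge. *)
Definition fhyp (A : Type) := A -> set A -> Prop.

Definition kfhyp (k : nat) (A : Type) := 'I_k -> fhyp A.

Definition is_map (k : nat) (A B : Type) (H : kfhyp k A) (K : kfhyp k B)
  (f : A -> B) : Prop :=
  forall i a V, H i a V -> K i (f a) (f @` V).

Definition reflects (k : nat) (A B : Type) (H : kfhyp k A) (K : kfhyp k B)
  (f : A -> B) : Prop :=
  forall a i U, K i (f a) U -> exists V, H i a V /\ f @` V = U.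

Definition positional_reduction (k : nat) (A B : Type) (H : kfhyp k A)
  (K : kfhyp k B) (f : A -> B) : Prop :=
  is_map H K f /\ (forall b, exists a, f a = b) /\ reflects H K f.

Definition equivalence_rel (A : Type) (E : A -> A -> Prop) : Prop :=
  (forall a, E a a) /\ (forall a b, E a b -> E b a) /\
  (forall a b c, E a b -> E b c -> E a c).

Definition regular_equivalence (A : Type) (H : fhyp A) (E : A -> A -> Prop)
  : Prop :=
  equivalence_rel E /\
  forall a a' U, E a a' -> H a U ->
    exists U', H a' U' /\
      (forall u, U u -> exists u', U' u' /\ E u u') /\
      (forall u', U' u' -> exists u, U u /\ E u u').

Definition eclass (A : Type) (E : A -> A -> Prop) (a : A) : set A :=
  [set x | E a x].

(* blockmodel H/E, with vertices the classes (as subsets of A):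
   ([a], X) is a hyperedge iff there is (a,U) in H with X = {[u] | u in U}. *)
Definition blockmodel (A : Type) (H : fhyp A) (E : A -> A -> Prop)
  : set A -> set (set A) -> Prop :=
  fun C X => exists a U, C = eclass E a /\ H a U /\ X = (eclass E) @` U.

Definition kernel_rel (A B : Type) (f : A -> B) : A -> A -> Prop :=
  fun a a' => f a = f a'.

(* fibre of f over b; for surjective f this is the bijection B ~ A/E
   under which f becomes the quotient map a |-> [a]. *)
Definition fibre (A B : Type) (f : A -> B) (b : B) : set A :=
  f @^-1` [set b].

(* Main.v *)
Require Import Defs.
From mathcomp Require Import all_boot classical_sets.
Local Open Scope classical_set_scope.

Lemma eclass_fibre (A B : Type) (f : A -> B) (a : A) :
  eclass (kernel_rel f) a = fibre f (f a).
Proof.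
apply/seteqP; split => x /=; rewrite /eclass /fibre /kernel_rel /=; by move=> ->.
Qed.

Lemma in_fibre (A B : Type) (f : A -> B) (a : A) (b : B) :
  fibre f b a <-> f a = b.
Proof. by rewrite /fibre /=; split. Qed.

Theorem lemma6p5 (k : nat) (A B : Type) (H : kfhyp k A) (K : kfhyp k B)
  (f : A -> B) (fmap : is_map H K f) :
  positional_reduction H K f <->
  ((forall i : 'I_k, regular_equivalence (H i) (kernel_rel f)) /\
   (forall b, exists a, f a = b) /\
   (forall (i : 'I_k) (b : B) (X : set B),
      K i b X <-> blockmodel (H i) (kernel_rel f) (fibre f b) ((fibre f) @` X))).
Proof.
have Eeq : Defs.equivalence_rel (kernel_rel f).
  rewrite /Defs.equivalence_rel /kernel_rel; split; first by [].
  split; first by move=> a b ->.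
  by move=> a b c -> ->.
split.
- move=> [_ [surj refl]]; split; [|split].
  + move=> i; split; first exact: Eeq.
    move=> a a' U Eaa' HU.
    have KU := fmap i a U HU.
    rewrite /kernel_rel in Eaa'; rewrite Eaa' in KU.
    have [V [HV fV]] := refl a' i _ KU.
    exists V; split; first exact: HV.
    split.
    * move=> u Uu.
      have : (f @` U) (f u) by exists u.
      rewrite -fV => -[v Vv fvu]; exists v; split => //.
    * move=> v Vv.
      have : (f @` V) (f v) by exists v.
      rewrite fV => -[u Uu fuv]; exists u; split => //.
  + exact: surj.
  + move=> i b X; split.
    * move=> KX; have [a fab] := surj b; subst b.
      have [V [HV fV]] := refl a i X KX.
      exists a, V; split; first by rewrite eclass_fibre.
      split; first exact: HV.
      rewrite -fV; apply/seteqP; split => C /=.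
      -- move=> [y [v Vv <-] <-]; exists v => //; by rewrite eclass_fibre.
      -- move=> [v Vv <-]; exists (f v); first by exists v.
         by rewrite eclass_fibre.
    * move=> [a [U [Fa [HU XU]]]].
      have fab : f a = b.
        apply (proj1 (@in_fibre _ _ f a b)); rewrite Fa; rewrite /eclass /=; exact: (proj1 Eeq).
      have KU := fmap i a U HU; rewrite fab in KU.
      suff -> : X = f @` U by [].
      apply/seteqP; split => y /=.
      -- move=> Xy.
         have : (eclass (kernel_rel f) @` U) (fibre f y) by rewrite -XU; exists y.
         move=> [u Uu Fu]; exists u => //.
         apply (proj1 (in_fibre _ _ _ _ _)); rewrite -Fu /eclass /=; exact: (proj1 Eeq).
      -- move=> [u Uu <-].
         have : (fibre f @` X) (eclass (kernel_rel f) u) by rewrite XU; exists u.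
         move=> [z Xz Fz].
         have : fibre f z u by rewrite Fz /eclass /=; exact: (proj1 Eeq).
         by move=> /(proj1 (in_fibre _ _ _ _ _)) ->.
- move=> [reg [surj bm]]; split; first exact: fmap.
  split; first exact: surj.
  move=> a i U KU.
  have [a0 [U0 [Fa [HU0 XU]]]] := proj1 (bm i (f a) U) KU.
  have fa0 : f a0 = f a.
    apply (proj1 (@in_fibre _ _ f a0 (f a))); rewrite Fa /eclass /=; exact: (proj1 Eeq).
  have [U' [HU' [fw bw]]] := (proj2 (reg i)) a0 a U0 fa0 HU0.
  exists U'; split; first exact: HU'.
  have fwd : forall u, U0 u -> U (f u).
    move=> u Uu.
    have : (fibre f @` U) (eclass (kernel_rel f) u) by rewrite XU; exists u.
    move=> [z Uz Fz].
    have : fibre f z u by rewrite Fz /eclass /=; exact: (proj1 Eeq).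
    by move=> /(proj1 (in_fibre _ _ _ _ _)) ->.
  have bwd : forall z, U z -> exists2 u, U0 u & f u = z.
    move=> z Uz.
    have : (eclass (kernel_rel f) @` U0) (fibre f z) by rewrite -XU; exists z.
    move=> [u Uu Fu]; exists u => //.
    apply (proj1 (in_fibre _ _ _ _ _)); rewrite -Fu /eclass /=; exact: (proj1 Eeq).
  apply/seteqP; split => y /=.
  + move=> [u' Uu' <-].
    have [u [Uu Euu']] := bw u' Uu'.
    rewrite /kernel_rel in Euu'; rewrite -Euu'; exact: fwd.
  + move=> Uy; have [u Uu fuy] := bwd y Uy.
    have [u' [Uu' Euu']] := fw u Uu.
    exists u' => //; rewrite -fuy; by rewrite /kernel_rel in Euu'.
Qed.
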